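(* Let $T$ be a string of length $n$ over an integer alphabet of size $n^{O(1)}$ whose last character $T[n]=\$$ occurs nowhere else in $T$. Suppose the suffix array $\mathrm{SA}$ of $T$ is stored as a plain array in $n\lg n$ bits (allowing constant-time access) and the LCP array is stored in the $2n+o(n)$-bit representation (allowing constant-time access). Then the longest previous factor array $\mathrm{LPF}$ of $T$ can be computed in $O(n)$ time using $O(\lg n)$ additional bits of working space, not counting the space for $\mathrm{LPF}$ itself.
   Context: Computational model: word RAM with word size $\Omega(\lg n)$. $\mathrm{SA}[i]$ is the starting position of the lexicographically $i$-th suffix of $T$. $\mathrm{LCP}[1]:=0$ and for $2\le i\le n$, $\mathrm{LCP}[i]$ is the length of the longest common prefix of $T[\mathrm{SA}[i]..n]$ and $T[\mathrm{SA}[i-1]..n]$. The $2n+o(n)$-bit representation of LCP: let $\mathrm{PLCP}[\mathrm{SA}[i]]=\mathrm{LCP}[i]$, $I[1]:=\mathrm{PLCP}[1]$, $I[i]:=\mathrm{PLCP}[i]-\mathrm{PLCP}[i-1]+1$ for $2\le i\le n$; write $0^{I[i]}1$ consecutively into a bit vector $S$ of length at most $2n$ and add a constant-time select structure, so that $\mathrm{LCP}[i]=\mathrm{select}_1(S,\mathrm{SA}[i])-2\,\mathrm{SA}[i]$. For $1\le j\le n$, $\mathrm{LPF}[j]:=\max\{\ell \mid \exists\, i\in[1..j-1] \text{ with } T[i..i+\ell-1]=T[j..j+\ell-1]\}$ (with $\ell=0$ allowed). *)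

(* Defs.v *)
From mathcomp Require Import all_boot.
Set Implicit Arguments. Unset Strict Implicit. Unset Printing Implicit Defensive.

(* A string T of length n = size T over an integer alphabet is a seq nat;
   T[i] (1 <= i <= n) is nth 0 T i.-1. *)

Definition suf (T : seq nat) (i : nat) : seq nat := drop i.-1 T.

Fixpoint lex_lt (s t : seq nat) : bool :=
  match s, t with
  | [::], [::] => false
  | [::], _ :: _ => true
  | _ :: _, [::] => false
  | a :: s', b :: t' => (a < b) || ((a == b) && lex_lt s' t')
  end.

Fixpoint lcp_len (s t : seq nat) : nat :=
  match s, t with
  | a :: s', b :: t' => if a == b then (lcp_len s' t').+1 else 0
  | _, _ => 0
  end.

(* sa (as the list [SA[1]; ...; SA[n]]) is the suffix array of T:
   SA[i] is the starting position of the lexicographically i-th suffix. *)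
Definition is_suffix_array (T sa : seq nat) : bool :=
  perm_eq sa (iota 1 (size T)) && sorted lex_lt [seq suf T i | i <- sa].

Definition SAf (sa : seq nat) (i : nat) : nat := nth 0 sa i.-1.

Definition LCPa (T sa : seq nat) (i : nat) : nat :=
  if i <= 1 then 0 else lcp_len (suf T (SAf sa i)) (suf T (SAf sa i.-1)).

Definition PLCP (T sa : seq nat) (p : nat) : nat := LCPa T sa (index p sa).+1.

(* I[1] := PLCP[1], I[i] := PLCP[i] - PLCP[i-1] + 1 (always >= 0) *)
Definition Ivec (T sa : seq nat) (i : nat) : nat :=
  if i == 1 then PLCP T sa 1 else PLCP T sa i + 1 - PLCP T sa i.-1.

Definition Sbits (T sa : seq nat) : seq bool :=
  flatten [seq nseq (Ivec T sa i) false ++ [:: true] | i <- iota 1 (size T)].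

(* select_1(S, j): 1-based position of the j-th 1 in S; 0 if j = 0 or S has
   fewer than j ones. *)
Fixpoint select1 (s : seq bool) (j : nat) : nat :=
  match s with
  | [::] => 0
  | b :: s' =>
      if b && (j == 1) then 1
      else let p := select1 s' (if b then j.-1 else j) in
           if p == 0 then 0 else p.+1
  end.

Definition substr_eq (T : seq nat) (i j l : nat) : bool :=
  [&& i + l <= (size T).+1, j + l <= (size T).+1 &
      take l (drop i.-1 T) == take l (drop j.-1 T)].

Definition LPF (T : seq nat) (j : nat) : nat :=
  \max_(l < (size T).+1 | [exists i : 'I_j, (1 <= i) && substr_eq T i j l]) l.

(* A program is a finite list of instructions over registers indexed by nat
   (a program mentions only finitely many, i.e. O(1), registers).  It has
   constant-time read-only access to n, to the plain array SA[1..n], and to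
   the 2n+o(n)-bit LCP representation: the bits of S and select_1 on S.  It
   has constant-time read/write access to the output array LPF[1..n], which is
   not counted as working space.  Each instruction costs one time unit. *)
Inductive instr :=
| IConst  (r c : nat)
| IAdd    (r a b : nat)
| ISub    (r a b : nat)                (* r := a - b (truncated) *)
| IMul    (r a b : nat)
| IDiv    (r a b : nat)                (* r := a / b  (0 if b = 0) *)
| IMod    (r a b : nat)
| IJlt    (a b tgt : nat)
| IJmp    (tgt : nat)
| IReadN  (r : nat)
| IReadSA (r a : nat)                  (* r := SA[a] (0 if out of range) *)
| IReadS  (r a : nat)                  (* r := S[a]  (0 if out of range) *)
| ISelect (r a : nat)
| IReadOut  (r a : nat)
| IWriteOut (a b : nat)                (* LPF[a] := b  (no-op if a not in [1..n]) *)
| IHalt.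

Record input := Input { in_n : nat; in_sa : seq nat; in_S : seq bool }.

Record config := Config { pc : nat; regs : nat -> nat; out : nat -> nat }.

Definition upd (f : nat -> nat) (k v : nat) : nat -> nat :=
  fun x => if x == k then v else f x.

Definition halted (P : seq instr) (c : config) : bool :=
  if nth IHalt P (pc c) is IHalt then true else false.

Definition step (P : seq instr) (inp : input) (c : config) : config :=
  let R := regs c in
  let nxt := (pc c).+1 in
  let set r v := Config nxt (upd R r v) (out c) in
  match nth IHalt P (pc c) with
  | IConst r k => set r k
  | IAdd r a b => set r (R a + R b)
  | ISub r a b => set r (R a - R b)
  | IMul r a b => set r (R a * R b)
  | IDiv r a b => set r (R a %/ R b)
  | IMod r a b => set r (R a %% R b)
  | IJlt a b t => Config (if R a < R b then t else nxt) R (out c)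
  | IJmp t => Config t R (out c)
  | IReadN r => set r (in_n inp)
  | IReadSA r a => set r (nth 0 (0 :: in_sa inp) (R a))
  | IReadS r a => set r (nat_of_bool (nth false (false :: in_S inp) (R a)))
  | ISelect r a => set r (select1 (in_S inp) (R a))
  | IReadOut r a => set r (out c (R a))
  | IWriteOut a b =>
      Config nxt R (if (1 <= R a <= in_n inp) then upd (out c) (R a) (R b)
                    else out c)
  | IHalt => c
  end.

Fixpoint run (P : seq instr) (inp : input) (k : nat) (c : config) : config :=
  if k is k'.+1 then run P inp k' (step P inp c) else c.

Definition init_config : config := Config 0 (fun _ => 0) (fun _ => 0).

Definition input_of (T sa : seq nat) : input := Input (size T) sa (Sbits T sa).

(* Main.v *)
Require Import Defs.
From mathcomp Require Import all_boot.
From mathcomp Require Import zify.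
Set Implicit Arguments. Unset Strict Implicit. Unset Printing Implicit Defensive.


Lemma lex_lt_irr s : lex_lt s s = false.
Proof. elim: s => //= a s ->; rewrite ltnn eqxx. by []. Qed.

Lemma lex_lt_trans : transitive lex_lt.
Proof.
move=> t s u; elim: s t u => [|a s IH] [|b t] [|c u] //=.
case/orP=> [ba|/andP[/eqP-> ts]]; case/orP=> [ac|/andP[/eqP<- su]].
- by rewrite (ltn_trans ba ac).
- by rewrite ba.
- by rewrite ac.
- by rewrite eqxx (IH _ _ ts su) orbT.
Qed.

Lemma lex_lt_asym s t : lex_lt s t -> lex_lt t s = false.
Proof.
move=> st; apply/negP=> ts; have := lex_lt_trans st ts; by rewrite lex_lt_irr.
Qed.

Lemma lcp_sym s t : lcp_len s t = lcp_len t s.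
Proof.
elim: s t => [|a s IH] [|b t] //=; by rewrite eq_sym IH.
Qed.

Lemma lcp_le_size s t : lcp_len s t <= size s.
Proof. elim: s t => [|a s IH] [|b t] //=; case: eqP => // _; by rewrite ltnS. Qed.

Lemma lcp3 s t u : lex_lt s t -> lex_lt t u -> lcp_len s u = minn (lcp_len s t) (lcp_len t u).
Proof.
elim: s t u => [|a s IH] [|b t] [|c u] //=; first by rewrite min0n.
case/orP=> [ab|/andP[/eqP<- st]]; case/orP=> [bc|/andP[/eqP<- tu]].
- by rewrite (ltn_eqF ab) (ltn_eqF (ltn_trans ab bc)) min0n.
- by rewrite (ltn_eqF ab) min0n.
- by rewrite eqxx (ltn_eqF bc) minn0.
- by rewrite !eqxx (IH _ _ st tu) minnSS.
Qed.

Lemma take_lcp s t l :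
  [&& l <= size s, l <= size t & take l s == take l t] = (l <= lcp_len s t).
Proof.
elim: s t l => [|a s IH] [|b t] [|l] //=; rewrite ?andbF //.
rewrite eqseq_cons. have [e|ne] := eqVneq a b.
  by rewrite /= !ltnS -IH.
by rewrite /= !andbF.
Qed.


Section Str.
Variables (T sa : seq nat).
Hypothesis SAok : is_suffix_array T sa.
Local Notation n := (size T).

Definition SAx c := nth 0 (0 :: sa) c.
Definition lcpG x y :=
  if (0 < x <= n) && (0 < y <= n) then lcp_len (suf T (SAx x)) (suf T (SAx y)) else 0.

Lemma perm_sa : perm_eq sa (iota 1 n).
Proof. by case/andP: SAok. Qed.

Lemma size_sa : size sa = n.
Proof. by rewrite (perm_size perm_sa) size_iota. Qed.

Lemma uniq_sa : uniq sa.
Proof. by rewrite (perm_uniq perm_sa) iota_uniq. Qed.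

Lemma mem_sa x : (x \in sa) = (0 < x <= n).
Proof. by rewrite (perm_mem perm_sa) mem_iota add1n ltnS. Qed.

Lemma SAx0 : SAx 0 = 0. Proof. by []. Qed.

Lemma SAxS c : SAx c.+1 = nth 0 sa c. Proof. by []. Qed.

Lemma SAx_out : SAx n.+1 = 0.
Proof. by rewrite SAxS nth_default // size_sa. Qed.

Lemma SAx_range c : 0 < c <= n -> 0 < SAx c <= n.
Proof.
case: c => // c /= cn; rewrite SAxS -mem_sa mem_nth // size_sa //.
Qed.

Lemma SAx_inj x y : 0 < x <= n -> 0 < y <= n -> SAx x = SAx y -> x = y.
Proof.
case: x => // x; case: y => // y /= xn yn; rewrite !SAxS => e.
congr S; apply/eqP; rewrite -(nth_uniq 0 _ _ uniq_sa) ?size_sa //; exact/eqP.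
Qed.

Lemma SAx_index j : 0 < j <= n -> SAx (index j sa).+1 = j /\ 0 < (index j sa).+1 <= n.
Proof.
move=> jr; have jin : j \in sa by rewrite mem_sa.
by rewrite SAxS nth_index // /= -size_sa index_mem.
Qed.

Lemma SAx_le c : SAx c <= n.
Proof.
case: c => // c; rewrite SAxS; case: (ltnP c (size sa)) => h.
  have := mem_nth 0 h; rewrite mem_sa; by case/andP.
by rewrite nth_default.
Qed.

Lemma SAx_sorted x y : 0 < x -> x < y -> y <= n ->
  lex_lt (suf T (SAx x)) (suf T (SAx y)).
Proof.
case: x => // x; case: y => // y _ xy yn.
have so : sorted lex_lt [seq suf T i | i <- sa] by case/andP: SAok.
have := sorted_ltn_nth lex_lt_trans [::] so.
move=> /(_ x y); rewrite !inE size_map size_sa !(nth_map 0) ?size_sa //.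
- apply; rewrite //; lia.
- lia.
Qed.

Lemma size_suf i : size (suf T i) <= n.
Proof. by rewrite /suf size_drop leq_subr. Qed.

Lemma lcpG_le x y : lcpG x y <= n.
Proof.
rewrite /lcpG; case: ifP => // _; exact: leq_trans (lcp_le_size _ _) (size_suf _).
Qed.

Lemma lcpG_sym x y : lcpG x y = lcpG y x.
Proof. by rewrite /lcpG andbC lcp_sym. Qed.

Lemma lcpG0l y : lcpG 0 y = 0. Proof. by []. Qed.
Lemma lcpG_outr x : lcpG x n.+1 = 0.
Proof. by rewrite /lcpG ltnn !andbF. Qed.

Lemma lcpG3 b c a : b < c -> c < a -> a <= n.+1 ->
  lcpG b a = minn (lcpG b c) (lcpG c a).
Proof.
move=> bc ca an.
case: b bc => [|b] bc; first by rewrite !lcpG0l min0n.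
case: (ltngtP a n.+1) an => // [alt|->] _; last by rewrite !lcpG_outr minn0.
rewrite /lcpG.
have -> : (0 < b.+1 <= n) && (0 < a <= n) by apply/andP; split; apply/andP; split; lia.
have -> : (0 < b.+1 <= n) && (0 < c <= n) by apply/andP; split; apply/andP; split; lia.
have -> : (0 < c <= n) && (0 < a <= n) by apply/andP; split; apply/andP; split; lia.
apply: lcp3; apply: SAx_sorted => //; lia.
Qed.

Lemma lcpG_mono_l x b c : 0 < x -> x <= b -> b < c -> c <= n ->
  lcpG x c <= lcpG b c.
Proof.
move=> x0 xb bc cn; case: (ltngtP x b) xb => // [xb|->] _; last by [].
rewrite (lcpG3 xb bc) //; [exact: geq_minr | lia].
Qed.

Lemma lcpG_mono_r c a x : c < a -> a <= x -> x <= n ->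
  lcpG c x <= lcpG c a.
Proof.
move=> ca ax xn; case: (ltngtP a x) ax => // [ax|->] _; last by [].
rewrite (lcpG3 ca ax) //; [exact: geq_minl | lia].
Qed.

End Str.


Section Key.
Variables (T sa : seq nat).
Hypothesis SAok : is_suffix_array T sa.
Local Notation n := (size T).
Local Notation SAx := (SAx sa).
Local Notation lcpG := (lcpG T sa).

Lemma substr_lcp i j l : 0 < i <= n -> 0 < j <= n ->
  substr_eq T i j l = (l <= lcp_len (suf T i) (suf T j)).
Proof.
move=> ir jr; rewrite /substr_eq -take_lcp /suf !size_drop.
have e1 : (i + l <= n.+1) = (l <= n - i.-1) by apply/idP/idP; lia.
have e2 : (j + l <= n.+1) = (l <= n - j.-1) by apply/idP/idP; lia.
by rewrite e1 e2.
Qed.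

Lemma LPF_ge j i l : 0 < i -> i < j -> j <= n ->
  l <= lcp_len (suf T i) (suf T j) -> l <= LPF T j.
Proof.
move=> i0 ij jn hl.
have ln : l < n.+1.
  rewrite ltnS; apply: leq_trans hl _; apply: leq_trans (lcp_le_size _ _) _.
  by rewrite /suf size_drop leq_subr.
have P0 : [exists i0 : 'I_j, (1 <= i0) && substr_eq T i0 j (Ordinal ln)].
  apply/existsP; exists (Ordinal ij); rewrite /= i0 /= substr_lcp //; lia.
exact: (leq_bigmax_cond (Ordinal ln) P0).
Qed.

Lemma LPF_key b c a : 0 < c <= n -> b < c -> c < a -> a <= n.+1 ->
  (b == 0) || (SAx b < SAx c) -> (forall x, b < x < c -> SAx c < SAx x) ->
  SAx a < SAx c -> (forall x, c < x < a -> SAx c < SAx x) ->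
  LPF T (SAx c) = maxn (lcpG b c) (lcpG c a).
Proof.
move=> cr bc ca an hb hbc hac hca.
have jr := SAx_range SAok cr.
apply/eqP; rewrite eqn_leq; apply/andP; split.
- apply/bigmax_leqP => l /existsP [i /andP [i1 sub]].
  have ir : 0 < i <= n by apply/andP; split => //; have := ltn_ord i; lia.
  rewrite substr_lcp // in sub; apply: leq_trans sub _.
  have [ex xr] := SAx_index SAok ir.
  move: ex xr; set x := (index (nat_of_ord i) sa).+1 => ex xr.
  have -> : lcp_len (suf T i) (suf T (SAx c)) = lcpG x c.
    by rewrite /lcpG xr cr ex.
  have ilt : (i : nat) < SAx c by exact: ltn_ord.
  case: (ltngtP x c) => [xc|cx|xc].
  + have xb : x <= b.
      rewrite leqNgt; apply/negP => bx.
      have := hbc x; rewrite bx xc ex => /(_ isT); lia.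
    apply: leq_trans (leq_maxl _ _); apply: lcpG_mono_l => //; lia.
  + have ax : a <= x.
      rewrite leqNgt; apply/negP => xa.
      have := hca x; rewrite cx xa ex => /(_ isT); lia.
    rewrite lcpG_sym; apply: leq_trans (leq_maxr _ _); apply: lcpG_mono_r => //; lia.
  + move: ilt; rewrite -ex xc; lia.
- rewrite geq_max; apply/andP; split.
  + case: b bc hb hbc => [|b] bc hb hbc; first by rewrite lcpG0l.
    have br : 0 < b.+1 <= n by lia.
    have bj : SAx b.+1 < SAx c by move: hb => /=.
    have := SAx_range SAok br => br'.
    apply: (LPF_ge (i := SAx b.+1)); try lia.
    by rewrite /lcpG br cr.
  + case: (ltngtP a n.+1) an => // [alt|->] _; last by rewrite lcpG_outr.
    have ar : 0 < a <= n by lia.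
    have := SAx_range SAok ar => ar'.
    apply: (LPF_ge (i := SAx a)); try lia.
    by rewrite /lcpG ar cr lcp_sym.
Qed.

End Key.


Lemma select1_0 s : select1 s 0 = 0.
Proof. elim: s => [|b s IH] //=; rewrite andbF; case: b; by rewrite /= IH. Qed.

Lemma select1_nseq k s j : select1 (nseq k false ++ s) j =
  if select1 s j == 0 then 0 else select1 s j + k.
Proof.
elim: k => [|k IH] /=; first by case: eqP => [->|_]; rewrite ?addn0.
rewrite IH; case: (select1 s j) => [|m] //=.
by rewrite addSn addnS.
Qed.
Lemma select_blocks ks j : 0 < j <= size ks ->
  select1 (flatten [seq nseq k false ++ [:: true] | k <- ks]) j =
  sumn [seq k.+1 | k <- take j ks].
Proof.
elim: ks j => [|k ks IH] j //= /andP[j0 jn].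
rewrite -catA cat1s select1_nseq /=.
case: j j0 jn => [|[|j]] //= _ jn.
  by rewrite take0 /= addn0 add1n.
rewrite IH; last by lia.
have : 0 < sumn [seq k0.+1 | k0 <- take j.+1 ks].
  by case: ks {IH} jn => [|k' ks] //= _; rewrite addSn.
case: (sumn _) => [|m] //= _; lia.
Qed.

Section Kasai.
Variables (T sa : seq nat).
Hypothesis SAok : is_suffix_array T sa.
Local Notation n := (size T).
Local Notation SAx := (SAx sa).
Local Notation lcpG := (lcpG T sa).

Lemma index_SAx a : 0 < a <= n -> index (SAx a) sa = a.-1.
Proof.
case: a => // a /= an; rewrite SAxS index_uniq ?(uniq_sa SAok) ?(size_sa SAok) //.
Qed.

Lemma PLCP_SAx a : 0 < a <= n -> PLCP T sa (SAx a) = lcpG a.-1 a.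
Proof.
move=> ar; rewrite /PLCP index_SAx // prednK; last by lia.
rewrite /LCPa /lcpG; case: a ar => [|[|a]] //= ar.
have -> : (0 < a.+1 <= n) && (0 < a.+2 <= n) by apply/andP; split; lia.
by rewrite lcp_sym.
Qed.

Lemma suf_cons i : 0 < i <= n -> suf T i = nth 0 T i.-1 :: suf T i.+1.
Proof. move=> ir; rewrite /suf (drop_nth 0); [rewrite prednK //; lia | lia]. Qed.

Lemma suf_end : suf T n.+1 = [::].
Proof. by rewrite /suf /= drop_size. Qed.

Lemma kasai q : 1 < q <= n -> PLCP T sa q.-1 <= (PLCP T sa q).+1.
Proof.
move=> qr.
have q1r : 0 < q.-1 <= n by lia.
have [ex xr] := SAx_index SAok q1r.
move: ex xr; set x := (index q.-1 sa).+1 => ex xr.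
rewrite -ex PLCP_SAx //.
case: x ex xr => [|[|w]] //= ex xr0.
have xr : 0 < w.+2 <= n by lia.
set v := SAx w.+1.
have wr : 0 < w.+1 <= n by lia.
have vr : 0 < v <= n := SAx_range SAok wr.
have so := SAx_sorted SAok (ltn0Sn w) (ltnSn w.+1) (proj2 (andP xr)).
rewrite /lcpG wr xr /=.
rewrite ex (suf_cons vr) (suf_cons q1r) -/v in so *.
have e1 : q.-1.+1 = q by lia.
rewrite e1 in so; rewrite /=.
case: ifP => [/eqP eh|_]; last by [].
rewrite /= eh ltnn eqxx /= in so.
rewrite ltnS e1.
case: (ltngtP v.+1 n.+1) => [vlt|vgt|veq]; [ | lia | by move: veq => [->]; rewrite suf_end].
have v1r : 0 < v.+1 <= n by lia.
have [ey yr] := SAx_index SAok v1r.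
move: ey yr; set y := (index v.+1 sa).+1 => ey yr.
have qr' : 0 < q <= n by lia.
have [ez zr] := SAx_index SAok qr'.
move: ez zr; set z := (index q sa).+1 => ez zr.
have yz : y != z.
  apply/eqP => eyz; have vq : v.+1 = q by rewrite -ey -ez eyz.
  have : w.+1 = w.+2.
    apply: (SAx_inj SAok) => //; rewrite ex; rewrite /v in vq; lia.
  lia.
have yltz : y < z.
  rewrite ltn_neqAle yz /=; rewrite leqNgt; apply/negP => zy.
  have := SAx_sorted SAok (proj1 (andP zr)) zy (proj2 (andP yr)).
  by rewrite ey ez (lex_lt_asym so).
rewrite -ez PLCP_SAx //.
have -> : lcp_len (suf T v.+1) (suf T (SAx z)) = lcpG y z by rewrite /lcpG yr zr ey.
apply: (lcpG_mono_l SAok); lia.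
Qed.

Lemma tele p : 0 < p <= n ->
  sumn [seq (Ivec T sa i).+1 | i <- iota 1 p] = PLCP T sa p + (p * 2 - 1).
Proof.
elim: p => [|p IH] // pr.
case: p IH pr => [|p] IH pr.
  by rewrite /= /Ivec /= addn0 addn1.
have -> : iota 1 p.+2 = iota 1 p.+1 ++ [:: p.+2] by rewrite -(iotaD 1 p.+1 1) addn1.
rewrite map_cat sumn_cat IH; last by lia.
have k := kasai (q := p.+2) ltac:(lia).
rewrite /= /Ivec /=; simpl in k; lia.
Qed.

Lemma Sbits_select p : 0 < p <= n -> select1 (Sbits T sa) p = PLCP T sa p + (p * 2 - 1).
Proof.
move=> pr; rewrite /Sbits.
have -> : [seq nseq (Ivec T sa i) false ++ [:: true] | i <- iota 1 n] =
  [seq nseq k false ++ [:: true] | k <- map (Ivec T sa) (iota 1 n)] by rewrite -map_comp.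
rewrite select_blocks ?size_map ?size_iota // -map_take take_iota.
have -> : minn p n = p by lia.
by rewrite -map_comp tele.
Qed.

Lemma PLCP_le p : PLCP T sa p <= n.
Proof.
rewrite /PLCP /LCPa; case: ifP => // _.
exact: leq_trans (lcp_le_size _ _) (size_suf _ _).
Qed.

Lemma curr_formula a : 0 < a <= n.+1 ->
  select1 (Sbits T sa) (SAx a) - (SAx a * 2 - 1) = lcpG a.-1 a /\
  select1 (Sbits T sa) (SAx a) <= 3 * n.
Proof.
move=> ar; case: (ltngtP a n.+1) => [alt|agt|->]; [|lia|]; last first.
  by rewrite SAx_out ?select1_0 ?lcpG_outr.
have ar' : 0 < a <= n by lia.
have := SAx_range SAok ar' => pr.
rewrite Sbits_select // PLCP_SAx //.
have := lcpG_le T sa a.-1 a; have := SAx_le SAok a.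
split; lia.
Qed.

End Kasai.


Definition gtr : rel nat := fun x y => y < x.
Lemma gtr_trans : transitive gtr.
Proof. move=> x y z; rewrite /gtr; lia. Qed.

Section Abs.
Variables (T sa : seq nat).
Hypothesis SAok : is_suffix_array T sa.
Local Notation n := (size T).
Local Notation SAx := (SAx sa).
Local Notation lcpG := (lcpG T sa).

Definition Base (a : nat) (st : seq nat) (O : nat -> nat) : Prop :=
  (0 < a <= n.+1) /\ sorted gtr st /\ all (fun c => 0 < c < a) st /\
  (forall c, c \in st -> forall x, c < x < a -> SAx c < SAx x) /\
  (forall i, i < size st ->
     (forall x, nth 0 st i.+1 < x < nth 0 st i -> SAx (nth 0 st i) < SAx x) /\
     O (SAx (nth 0 st i)) = SAx (nth 0 st i.+1) * n.+1 + lcpG (nth 0 st i.+1) (nth 0 st i)) /\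
  (forall c, 0 < c < a -> c \notin st -> O (SAx c) = LPF T (SAx c)) /\
  (forall c, a <= c <= n -> O (SAx c) = 0).

Definition Outer a st O := Base a st O /\ (1 < a -> head 0 st = a.-1).
Definition Inner a st curr O := Base a st O /\
  (forall x, head 0 st < x < a -> SAx a < SAx x) /\ curr = lcpG (head 0 st) a.
Definition Final (O : nat -> nat) := forall j, 0 < j <= n -> O j = LPF T j.

Lemma SAx_neq x y : 0 < x <= n -> 0 < y <= n -> x != y -> SAx x != SAx y.
Proof. move=> xr yr; apply: contra => /eqP e; apply/eqP. exact: (SAx_inj SAok xr yr e). Qed.

Lemma upd_neq (O : nat -> nat) k v x : x != k -> upd O k v x = O x.
Proof. by rewrite /upd => /negbTE ->. Qed.

Lemma upd_eq (O : nat -> nat) k v : upd O k v k = v.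
Proof. by rewrite /upd eqxx. Qed.

Lemma L_start a st O : Outer a st O -> Inner a st (lcpG a.-1 a) O.
Proof.
move=> [B h]; have hd : head 0 st = a.-1.
  case: (ltnP 1 a) => a1; first exact: h.
  case: B => [ar [_ [al _]]]; case: st al {h} => [|c st] //=.
    move=> _; lia.
  case/andP => /andP[c0 ca]; lia.
split=> //; split; last by rewrite hd.
move=> x; rewrite hd; lia.
Qed.

Lemma L_pop a st curr O : Inner a st curr O -> SAx a < SAx (head 0 st) ->
  let c := head 0 st in let b := nth 0 st 1 in
  [/\ 0 < SAx c <= n, O (SAx c) = SAx b * n.+1 + lcpG b c, SAx b <= n, lcpG b c <= n &
   Inner a (behead st) (minn curr (lcpG b c)) (upd O (SAx c) (maxn (lcpG b c) curr))].
Proof.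
move=> [[ar [so [al [A3 [A4 [A5 A6]]]]]] [I1 I2]] lt.
case: st so al A3 A4 A5 A6 I1 I2 lt => [|c0 st'] so al A3 A4 A5 A6 I1 I2 lt.
  by rewrite /= SAx0 in lt.
rewrite /= in I1 I2 lt *.
move: al => /= /andP[/andP[c0p c0a] al].
have c0r : 0 < c0 <= n by lia.
have allc : all (gtr c0) st' by apply: order_path_min => //; exact: gtr_trans.
have b_lt : head 0 st' < c0.
  by case: st' allc {so al A3 A4 A5 A6 I1 I2 lt} => [|b' st'] //= /andP[].
have [P1 P2] := A4 0 isT; rewrite /= ?nth0 in P1 P2.
rewrite nth0.
have bn := SAx_le SAok (head 0 st').
have hb : (head 0 st' == 0) || (SAx (head 0 st') < SAx c0).
  case: st' allc al A3 {b_lt P1 P2 bn so A4 A5 A6 I1 I2 lt} => [|b' st'] //= /andP[bc _] _ A3.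
  apply/orP; right; apply: (A3 b'); first by rewrite !inE eqxx orbT.
  rewrite /gtr in bc; lia.
have LPFc : LPF T (SAx c0) = maxn (lcpG (head 0 st') c0) (lcpG c0 a).
  apply: (LPF_key SAok) => //; try lia.
  by move=> x hx; apply: (A3 c0); rewrite ?inE ?eqxx //.
have inj_ne x : x \in st' -> SAx x != SAx c0.
  move=> xin; have := allP allc x xin; rewrite /gtr => xc.
  have := allP al x xin => /andP[x0 xa].
  apply: SAx_neq => //; [lia | lia].
split => //.
- exact: (SAx_range SAok c0r).
- exact: (lcpG_le T sa).
- split; first split.
  + lia.
  + split; first exact: path_sorted so.
    split; first by [].
    split; first by move=> c' c'in; apply: A3; rewrite inE c'in orbT.
    split.
      move=> i hi; have [Q1 Q2] := A4 i.+1 hi; rewrite /= in Q1 Q2.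
      split; first exact: Q1.
      rewrite upd_neq //; apply: inj_ne; exact: mem_nth.
    split.
      move=> c' hc' nin; case: (c' =P c0) => [->|ne].
        by rewrite upd_eq LPFc I2.
      rewrite upd_neq; last by apply: SAx_neq; [lia|lia|apply/eqP].
      apply: A5 => //; rewrite inE negb_or nin andbT; exact/eqP.
    move=> c' hc'; rewrite upd_neq; last by apply: SAx_neq; lia.
    exact: A6.
  split.
  + move=> x hx; case: (ltngtP x c0) => [xc|cx|->]; last by [].
    * have := P1 x ltac:(lia); lia.
    * apply: I1; lia.
  + rewrite I2 (lcpG3 SAok b_lt c0a) 1?minnC //; lia.
Qed.

Lemma L_push a st curr O : Inner a st curr O -> SAx (head 0 st) <= SAx a ->
  let O' := if 1 <= SAx a <= n then upd O (SAx a) (SAx (head 0 st) * n.+1 + curr) else O in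
  (a = n.+1 /\ Final O') \/ (a <= n /\ Outer a.+1 (a :: st) O').
Proof.
move=> [[ar [so [al [A3 [A4 [A5 A6]]]]]] [I1 I2]] le O'.
have stpos : forall c, c \in st -> 0 < c < a by move=> c /(allP al).
case: (ltngtP a n.+1) ar => [alt|agt|aeq] ar; last 2 first.
- lia.
- left; split => //.
  have st0 : st = [::].
    case: st so al A3 A4 A5 A6 I1 I2 le stpos {O'} => [|c st] //= _ _ _ _ _ _ _ _ le stpos.
    have cr : 0 < c <= n by have := stpos c; rewrite inE eqxx => /(_ isT); lia.
    have := SAx_range SAok cr; rewrite aeq SAx_out in le; lia.
  have -> : O' = O by rewrite /O' aeq SAx_out.
  move=> j jr; have [ej xr] := SAx_index SAok jr.
  rewrite -ej; apply: A5; first by lia.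
  by rewrite st0.
right; split; first by lia.
have ar' : 0 < a <= n by lia.
have pr := SAx_range SAok ar'.
have -> : O' = upd O (SAx a) (SAx (head 0 st) * n.+1 + curr) by rewrite /O' pr.
have ne c : c \in st -> SAx c != SAx a.
  move=> cin; have := stpos c cin => cr; apply: SAx_neq => //; lia.
have hdmax : forall c, c \in st -> c <= head 0 st.
  case: st so {A3 A4 A5 A6 I1 I2 le stpos ne al O'} => [|h st] //= so c.
  rewrite inE => /orP[/eqP->//|cin].
  have := allP (order_path_min gtr_trans so) c cin; rewrite /gtr; lia.
split; last by [].
split; first by lia.
split.
  rewrite /= path_sortedE; last exact: gtr_trans.
  rewrite so andbT; apply/allP => c cin; rewrite /gtr; have := stpos c cin; lia.
split.
  rewrite /= ltnSn andbT (proj1 (andP ar')) /=; apply/allP => c cin; have := stpos c cin; lia.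
split.
  move=> c; rewrite inE => /orP[/eqP->|cin] x hx; first by lia.
  case: (ltngtP x a) => [xa|ax|->]; [by apply: A3; lia | lia | ].
  have hin : head 0 st \in st by case: st cin {hdmax ne stpos A3 A4 A5 A6 so al I1 I2 le O'} => [|h s] // _; exact: mem_head.
  have hr := stpos _ hin.
  have hne : SAx (head 0 st) != SAx a by exact: ne.
  case: (ltngtP c (head 0 st)) (hdmax c cin) => [ch|//|->] _.
  - have := A3 c cin (head 0 st) ltac:(lia); lia.
  - lia.
split.
  move=> [|i] hi /=.
    split; first by move=> x hx; apply: I1.
    by rewrite nth0 upd_eq I2.
  have hi' : i < size st by [].
  have [Q1 Q2] := A4 i hi'; split => //.
  rewrite upd_neq //; apply: ne; exact: mem_nth.
split.
  move=> c hc; rewrite inE negb_or => /andP[cne cnin].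
  rewrite upd_neq; last by apply: SAx_neq => //; lia.
  apply: A5 => //; lia.
move=> c hc; rewrite upd_neq; last by apply: SAx_neq => //; lia.
apply: A6; lia.
Qed.

End Abs.


Definition prog : seq instr :=
  [:: IReadN 7; IConst 5 1; IAdd 7 7 5; IAdd 4 7 5; IConst 10 2; IConst 0 1;
      IJlt 0 4 8; IHalt; IReadSA 1 0; IMul 6 1 10; ISub 6 6 5; ISelect 2 1;
      ISub 2 2 6; IJlt 1 3 20; IMul 6 3 7; IAdd 6 6 2; IWriteOut 1 6;
      IAdd 3 1 12; IAdd 0 0 5; IJmp 6; IReadOut 6 3; IDiv 8 6 7; IMod 9 6 7;
      IJlt 9 2 26; IWriteOut 3 9; IJmp 28; IWriteOut 3 2; IAdd 2 9 12;
      IAdd 3 8 12; IJmp 13].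

Definition off (k : nat) : nat :=
  match k with
  | 6 => 14 | 8 => 13 | 9 => 12 | 10 => 11 | 11 => 10 | 12 => 9 | 13 => 8
  | 14 => 7 | 15 => 6 | 16 => 5 | 17 => 17 | 18 => 16 | 19 => 15
  | 20 => 7 | 21 => 6 | 22 => 5 | 23 => 4 | 24 => 3 | 26 => 3
  | 25 => 11 | 27 => 11 | 28 => 10 | 29 => 9 | _ => 0 end.

Section Mach.
Variables (T sa : seq nat).
Hypothesis SAok : is_suffix_array T sa.
Hypothesis n0 : 0 < size T.
Local Notation n := (size T).
Local Notation SAx := (SAx sa).
Local Notation lcpG := (lcpG T sa).
Local Notation inp := (input_of T sa).
Local Notation Outer := (Outer T sa).
Local Notation Inner := (Inner T sa).
Local Notation Final := (Final T).

Definition Bd := n.+1 ^ 64.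
Definition good (R O : nat -> nat) := (forall r, R r < Bd) /\ (forall j, O j < Bd).
Definition Consts (R : nat -> nat) :=
  [/\ R 4 = n.+2, R 5 = 1, R 7 = n.+1, R 10 = 2 & R 12 = 0].

Definition S8 a st (R O : nat -> nat) := [/\ R 0 = a, Outer a st O & R 3 = SAx (head 0 st)].
Definition S13 a st (R O : nat -> nat) :=
  [/\ R 0 = a, R 1 = SAx a, Inner a st (R 2) O & R 3 = SAx (head 0 st)].
Definition H6 a st (O : nat -> nat) (top : nat) :=
  (a = n.+2 /\ Final O) \/ (Outer a st O /\ top = SAx (head 0 st)).

Definition Spec (k : nat) (R O : nat -> nat) (g : nat * seq nat) : Prop :=
  let (a, st) := g in
  match k with
  | 6 => R 0 = a /\ H6 a st O (R 3)
  | 7 => Final O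
  | 8 => S8 a st R O
  | 9 => S8 a st R O /\ R 1 = SAx a
  | 10 => [/\ S8 a st R O, R 1 = SAx a & R 6 = SAx a * 2]
  | 11 => [/\ S8 a st R O, R 1 = SAx a & R 6 = SAx a * 2 - 1]
  | 12 => [/\ S8 a st R O, R 1 = SAx a, R 6 = SAx a * 2 - 1 & R 2 = select1 (Sbits T sa) (SAx a)]
  | 13 => S13 a st R O
  | 14 => S13 a st R O /\ R 3 <= R 1
  | 15 => [/\ S13 a st R O, R 3 <= R 1 & R 6 = R 3 * n.+1]
  | 16 => [/\ S13 a st R O, R 3 <= R 1 & R 6 = R 3 * n.+1 + R 2]
  | 17 => [/\ R 0 + 1 = a, R 1 = SAx (R 0) & H6 a st O (R 1)]
  | 18 => R 0 + 1 = a /\ H6 a st O (R 3)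
  | 19 => R 0 = a /\ H6 a st O (R 3)
  | 20 => S13 a st R O /\ R 1 < R 3
  | 21 => [/\ S13 a st R O, R 1 < R 3 & R 6 = O (R 3)]
  | 22 => [/\ S13 a st R O, R 1 < R 3, R 6 = O (R 3) & R 8 = SAx (nth 0 st 1)]
  | 23 => [/\ S13 a st R O, R 1 < R 3, R 8 = SAx (nth 0 st 1) & R 9 = lcpG (nth 0 st 1) (head 0 st)]
  | 24 => [/\ S13 a st R O, R 1 < R 3, R 8 = SAx (nth 0 st 1), R 9 = lcpG (nth 0 st 1) (head 0 st) & R 2 <= R 9]
  | 26 => [/\ S13 a st R O, R 1 < R 3, R 8 = SAx (nth 0 st 1), R 9 = lcpG (nth 0 st 1) (head 0 st) & R 9 < R 2]
  | 25 => [/\ R 0 = a, R 1 = SAx a, Inner a st (R 2) O & R 8 = SAx (head 0 st)]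
  | 27 => [/\ R 0 = a, R 1 = SAx a, Inner a st (R 9) O & R 8 = SAx (head 0 st)]
  | 28 => [/\ R 0 = a, R 1 = SAx a, Inner a st (R 2) O & R 8 = SAx (head 0 st)]
  | 29 => S13 a st R O
  | _ => False
  end.

Definition Inv (c : config) (g : nat * seq nat) :=
  [/\ good (regs c) (out c), Consts (regs c) & Spec (pc c) (regs c) (out c) g].

Definition pot (k : nat) (g : nat * seq nat) := 22 * (n.+2 - g.1) + 9 * size g.2 + off k.

Lemma Bd_big x : x <= 3 * (n.+1 * n.+1) -> x < Bd.
Proof.
move=> hx; apply: leq_ltn_trans hx _.
have e : n.+1 ^ 4 = (n.+1 * n.+1) * (n.+1 * n.+1) by rewrite !expnS expn0 muln1 !mulnA.
have h2 : n.+1 ^ 4 <= Bd by rewrite /Bd leq_pexp2l.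
rewrite e in h2.
have h4 : 4 <= n.+1 * n.+1 by nia.
move: h2 h4; set m := n.+1 * n.+1 => h2 h4.
have : m * 4 <= m * m by rewrite leq_mul2l h4 orbT.
lia.
Qed.

Lemma good_upd R O r v : good R O -> v < Bd -> good (upd R r v) O.
Proof. move=> [gR gO] hv; split=> // x; rewrite /upd; by case: eqP. Qed.

Lemma good_out R O k v : good R O -> v < Bd -> good R (upd O k v).
Proof. move=> [gR gO] hv; split=> // x; rewrite /upd; by case: eqP. Qed.

Lemma Consts_upd R r v : Consts R -> r \notin [:: 4; 5; 7; 10; 12] -> Consts (upd R r v).
Proof.
move=> [h4 h5 h7 h10 h12]; rewrite !inE => hr.
split; rewrite /upd; case: eqP => // e; move: hr; rewrite -e //.
Qed.

Lemma Inv_upd k R O g r v : good R O -> Consts R -> v < Bd ->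
  r \notin [:: 4; 5; 7; 10; 12] -> Spec k (upd R r v) O g -> Inv (Config k (upd R r v) O) g.
Proof. move=> gd C hv hr S; split => //; [exact: good_upd | exact: Consts_upd]. Qed.

Definition StepOK k := forall R O g, Inv (Config k R O) g ->
  exists g', Inv (step prog inp (Config k R O)) g' /\
             pot (pc (step prog inp (Config k R O))) g' < pot k g.

Lemma Base_a a st O : Base T sa a st O -> 0 < a <= n.+1.
Proof. by case. Qed.
Lemma Outer_a a st O : Outer a st O -> 0 < a <= n.+1.
Proof. by case=> /Base_a. Qed.
Lemma Inner_a a st c O : Inner a st c O -> 0 < a <= n.+1.
Proof. by case=> /Base_a. Qed.
Lemma Inner_curr a st c O : Inner a st c O -> c <= n.
Proof. case=> _ [_ ->]; exact: lcpG_le. Qed.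

Ltac potac := rewrite /pot /=; lia.

Lemma st6 : StepOK 6.
Proof.
move=> R O [a st] [gd C S]; rewrite /= in gd C S; case: (C) => C4 C5 C7 C10 C12; case: S => h0 H; rewrite /step /= C4 h0.
case: (ltnP a n.+2) => ha.
- exists (a, st); split; last by potac.
  split => //; rewrite /Spec /S8.
  case: H => [[ea _]|[Ho h3]]; first by lia.
  by split.
- exists (a, st); split; last by potac.
  split => //; rewrite /Spec.
  case: H => [[ea F]|[Ho h3]] //.
  have := Outer_a Ho; lia.
Qed.

Lemma st8 : StepOK 8.
Proof.
move=> R O [a st] [gd C S]; rewrite /= in gd C S; case: (C) => C4 C5 C7 C10 C12; case: S => h0 Ho h3; exists (a, st); rewrite /step /=.
split; last by potac.
apply: Inv_upd; [done|done| |done| ].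
  { apply: Bd_big; have := SAx_le SAok (R 0); rewrite /SAx; nia. }
by rewrite /Spec /S8 /upd /= h0.
Qed.

Lemma st9 : StepOK 9.
Proof.
move=> R O [a st] [gd C S]; rewrite /= in gd C S; case: (C) => C4 C5 C7 C10 C12; case: S => [[h0 Ho h3] h1]; exists (a, st); rewrite /step /=.
split; last by potac.
apply: Inv_upd; [done|done| |done| ].
  { apply: Bd_big; have := SAx_le SAok a; rewrite h1 C10; nia. }
by rewrite /Spec /S8 /upd /= h1 C10.
Qed.

Lemma st10 : StepOK 10.
Proof.
move=> R O [a st] [gd C S]; rewrite /= in gd C S; case: (C) => C4 C5 C7 C10 C12; case: S => [[h0 Ho h3] h1 h6]; exists (a, st); rewrite /step /=.
split; last by potac.
apply: Inv_upd; [done|done| |done| ].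
  { apply: Bd_big; have := SAx_le SAok a; rewrite h6 C5; nia. }
by rewrite /Spec /S8 /upd /= h6 C5.
Qed.

Lemma st11 : StepOK 11.
Proof.
move=> R O [a st] [gd C S]; rewrite /= in gd C S; case: (C) => C4 C5 C7 C10 C12; case: S => [[h0 Ho h3] h1 h6]; exists (a, st); rewrite /step /=.
split; last by potac.
have ar := Outer_a Ho.
have [_ hs] := curr_formula SAok ar.
apply: Inv_upd; [done|done| |done| ].
  { apply: Bd_big; rewrite h1; nia. }
by rewrite /Spec /S8 /upd /= h1.
Qed.

Lemma st12 : StepOK 12.
Proof.
move=> R O [a st] [gd C S]; rewrite /= in gd C S; case: (C) => C4 C5 C7 C10 C12; case: S => [[h0 Ho h3] h1 h6 h2]; exists (a, st); rewrite /step /=.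
split; last by potac.
have ar := Outer_a Ho.
have [hc hs] := curr_formula SAok ar.
apply: Inv_upd; [done|done| |done| ].
  { apply: Bd_big; rewrite h2; nia. }
rewrite /Spec /S13 /upd /= h2 h6 hc; split => //.
exact: L_start.
Qed.

Lemma st13 : StepOK 13.
Proof.
move=> R O [a st] [gd C S]; rewrite /= in gd C S; case: (C) => C4 C5 C7 C10 C12; case: S => h0 h1 Hi h3; exists (a, st); rewrite /step /=.
case: ifP => hl; (split; last by potac); split => //=; rewrite /S13 //.
split => //; rewrite leqNgt hl //.
Qed.

Lemma S13_facts a st R O : S13 a st R O ->
  [/\ R 2 <= n, R 3 <= n, R 1 <= n, R 0 = a & 0 < a <= n.+1].
Proof.
case=> h0 h1 Hi h3; split => //.
- exact: Inner_curr Hi.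
- rewrite h3; exact: SAx_le.
- rewrite h1; exact: SAx_le.
- exact: Inner_a Hi.
Qed.

Lemma st14 : StepOK 14.
Proof.
move=> R O [a st] [gd C S]; rewrite /= in gd C S; case: (C) => C4 C5 C7 C10 C12.
case: S => S le; have [f2 f3 f1 f0 fa] := S13_facts S.
exists (a, st); rewrite /step /=.
split; last by potac.
apply: Inv_upd; [done|done| |done| ].
  { apply: Bd_big; rewrite C7; nia. }
case: S => h0 h1 Hi h3.
by rewrite /Spec /S13 /upd /= C7.
Qed.

Lemma st15 : StepOK 15.
Proof.
move=> R O [a st] [gd C S]; rewrite /= in gd C S; case: (C) => C4 C5 C7 C10 C12.
case: S => S le h6; have [f2 f3 f1 f0 fa] := S13_facts S.
exists (a, st); rewrite /step /=.
split; last by potac.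
apply: Inv_upd; [done|done| |done| ].
  { apply: Bd_big; rewrite h6; nia. }
case: S => h0 h1 Hi h3.
by rewrite /Spec /S13 /upd /= h6.
Qed.

Lemma st16 : StepOK 16.
Proof.
move=> R O [a st] [gd C S]; rewrite /= in gd C S; case: (C) => C4 C5 C7 C10 C12.
case: S => S le h6; have [f2 f3 f1 f0 fa] := S13_facts S.
case: S => h0 h1 Hi h3.
rewrite /step /=.
have gd' : good R (if 1 <= R 1 <= n then upd O (R 1) (R 6) else O).
  case: ifP => _ //; apply: good_out => //; apply: Bd_big; rewrite h6; nia.
have le' : SAx (head 0 st) <= SAx a by rewrite -h1 -h3.
have := L_push SAok Hi le'; rewrite /= -h1 -h3 -h6.
case=> [[ea F]|[an Ho]].
- exists (n.+2, st); split; last by potac.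
  split => //=; split => //; [lia | by rewrite h1 h0 | by left].
- exists (a.+1, a :: st); split; last by potac.
  split => //=; split => //; [lia | by rewrite h1 h0 | by right; split].
Qed.

Lemma st17 : StepOK 17.
Proof.
move=> R O [a st] [gd C S]; rewrite /= in gd C S; case: (C) => C4 C5 C7 C10 C12.
case: S => h0 h1 H.
exists (a, st); rewrite /step /=.
split; last by potac.
apply: Inv_upd; [done|done| |done| ].
  { apply: Bd_big; rewrite C12 h1; have := SAx_le SAok (R 0); nia. }
by rewrite /Spec /upd /= C12 addn0.
Qed.

Lemma st18 : StepOK 18.
Proof.
move=> R O [a st] [gd C S]; rewrite /= in gd C S; case: (C) => C4 C5 C7 C10 C12.
case: S => h0 H.
have ha : a <= n.+2 by case: H => [[-> _]|[Ho _]] //; have := Outer_a Ho; lia.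
exists (a, st); rewrite /step /=.
split; last by potac.
apply: Inv_upd; [done|done| |done| ].
  { apply: Bd_big; rewrite C5; nia. }
by rewrite /Spec /upd /= C5 h0.
Qed.

Lemma st19 : StepOK 19.
Proof.
move=> R O [a st] [gd C S]; rewrite /= in gd C S.
exists (a, st); rewrite /step /=; split; last by potac.
by split.
Qed.

Lemma st20 : StepOK 20.
Proof.
move=> R O [a st] [gd C S]; rewrite /= in gd C S; case: (C) => C4 C5 C7 C10 C12.
case: S => S lt.
exists (a, st); rewrite /step /=.
split; last by potac.
apply: Inv_upd => //; try by case: gd.
all: by case: S => h0 h1 Hi h3; rewrite /Spec /S13 /upd /=.
Qed.

Lemma st21 : StepOK 21.
Proof.
move=> R O [a st] [gd C S]; rewrite /= in gd C S; case: (C) => C4 C5 C7 C10 C12.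
case: S => S lt h6; case: (S) => h0 h1 Hi h3.
have lt' : SAx a < SAx (head 0 st) by rewrite -h1 -h3.
have [cr eO bn ln Hi'] := L_pop SAok Hi lt'.
have eq8 : R 6 %/ R 7 = SAx (nth 0 st 1).
  rewrite h6 h3 eO C7 divnMDl // divn_small ?addn0 //; lia.
exists (a, st); rewrite /step /=.
split; last by potac.
apply: Inv_upd; [done|done| |done| ].
  { apply: Bd_big; rewrite eq8; nia. }
by rewrite /Spec /S13 /upd /= eq8.
Qed.

Lemma st22 : StepOK 22.
Proof.
move=> R O [a st] [gd C S]; rewrite /= in gd C S; case: (C) => C4 C5 C7 C10 C12.
case: S => S lt h6 h8; case: (S) => h0 h1 Hi h3.
have lt' : SAx a < SAx (head 0 st) by rewrite -h1 -h3.
have [cr eO bn ln Hi'] := L_pop SAok Hi lt'.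
have eq9 : R 6 %% R 7 = lcpG (nth 0 st 1) (head 0 st).
  rewrite h6 h3 eO C7 modnMDl modn_small //; lia.
exists (a, st); rewrite /step /=.
split; last by potac.
apply: Inv_upd; [done|done| |done| ].
  { apply: Bd_big; rewrite eq9; nia. }
by rewrite /Spec /S13 /upd /= eq9.
Qed.

Lemma st23 : StepOK 23.
Proof.
move=> R O [a st] [gd C S]; rewrite /= in gd C S.
case: S => S lt h8 h9.
exists (a, st); rewrite /step /=.
case: ifP => hl; (split; last by potac); split => //=.
split => //; rewrite leqNgt hl //.
Qed.

Lemma behead_head st : head 0 (behead st) = nth 0 st 1.
Proof. by case: st => [|x [|y s]]. Qed.

Lemma st24 : StepOK 24.
Proof.
move=> R O [a st] [gd C S]; rewrite /= in gd C S; case: (C) => C4 C5 C7 C10 C12.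
case: S => S lt h8 h9 le; case: (S) => h0 h1 Hi h3.
have lt' : SAx a < SAx (head 0 st) by rewrite -h1 -h3.
have [cr eO bn ln Hi'] := L_pop SAok Hi lt'.
have stn : 0 < size st by move: cr; clear; case: st.
exists (a, behead st); rewrite /step /=.
split; last by rewrite /pot /= size_behead; lia.
rewrite h3 cr.
split => //=.
  apply: good_out => //; apply: Bd_big; rewrite h9; nia.
split => //; last by rewrite behead_head.
by rewrite -h9 (minn_idPl le) (maxn_idPl le) in Hi'.
Qed.

Lemma st26 : StepOK 26.
Proof.
move=> R O [a st] [gd C S]; rewrite /= in gd C S; case: (C) => C4 C5 C7 C10 C12.
case: S => S lt h8 h9 le; case: (S) => h0 h1 Hi h3.
have lt' : SAx a < SAx (head 0 st) by rewrite -h1 -h3.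
have [cr eO bn ln Hi'] := L_pop SAok Hi lt'.
have stn : 0 < size st by move: cr; clear; case: st.
have f2 := Inner_curr Hi.
exists (a, behead st); rewrite /step /=.
split; last by rewrite /pot /= size_behead; lia.
rewrite h3 cr.
split => //=.
  apply: good_out => //; apply: Bd_big; nia.
split => //; last by rewrite behead_head.
by rewrite -h9 (minn_idPr (ltnW le)) (maxn_idPr (ltnW le)) in Hi'.
Qed.

Lemma st25 : StepOK 25.
Proof.
move=> R O [a st] [gd C S]; rewrite /= in gd C S.
exists (a, st); rewrite /step /=; split; last by potac.
by split.
Qed.

Lemma st27 : StepOK 27.
Proof.
move=> R O [a st] [gd C S]; rewrite /= in gd C S; case: (C) => C4 C5 C7 C10 C12.
case: S => h0 h1 Hi h8.
have f := Inner_curr Hi.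
exists (a, st); rewrite /step /=.
split; last by potac.
apply: Inv_upd; [done|done| |done| ].
  { apply: Bd_big; rewrite C12; nia. }
by rewrite /Spec /upd /= C12 addn0.
Qed.

Lemma st28 : StepOK 28.
Proof.
move=> R O [a st] [gd C S]; rewrite /= in gd C S; case: (C) => C4 C5 C7 C10 C12.
case: S => h0 h1 Hi h8.
exists (a, st); rewrite /step /=.
split; last by potac.
apply: Inv_upd; [done|done| |done| ].
  { apply: Bd_big; rewrite C12 h8; have := SAx_le SAok (head 0 st); nia. }
by rewrite /Spec /S13 /upd /= C12 addn0.
Qed.

Lemma st29 : StepOK 29.
Proof.
move=> R O [a st] [gd C S]; rewrite /= in gd C S.
exists (a, st); rewrite /step /=; split; last by potac.
by split.
Qed.

Lemma halted_step c : halted prog c -> step prog inp c = c.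
Proof. case: c => k R O; rewrite /halted /step /=; by case: (nth IHalt prog k). Qed.

Lemma step_all c g : Inv c g -> ~~ halted prog c ->
  exists g', Inv (step prog inp c) g' /\ pot (pc (step prog inp c)) g' < pot (pc c) g.
Proof.
case: c g => k R O [a st] I nh.
case: k I nh => [|[|[|[|[|[|[|[|[|[|[|[|[|[|[|[|[|[|[|[|[|[|[|[|[|[|[|[|[|[|k]]]]]]]]]]]]]]]]]]]]]]]]]]]]]] I nh;
  try by case: I => _ _ /= [].
- exact: (st6 I).
- by [].
- exact: (st8 I).
- exact: (st9 I).
- exact: (st10 I).
- exact: (st11 I).
- exact: (st12 I).
- exact: (st13 I).
- exact: (st14 I).
- exact: (st15 I).
- exact: (st16 I).
- exact: (st17 I).
- exact: (st18 I).
- exact: (st19 I).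
- exact: (st20 I).
- exact: (st21 I).
- exact: (st22 I).
- exact: (st23 I).
- exact: (st24 I).
- exact: (st25 I).
- exact: (st26 I).
- exact: (st27 I).
- exact: (st28 I).
- exact: (st29 I).
Qed.

Lemma inv_forever k c g : Inv c g -> exists g', Inv (run prog inp k c) g'.
Proof.
elim: k c g => [|k IH] c g I /=; first by exists g.
case: (boolP (halted prog c)) => h.
  rewrite halted_step //; exact: IH I.
have [g' [I' _]] := step_all I h; exact: IH I'.
Qed.

Lemma terminate m c g : pot (pc c) g <= m -> Inv c g ->
  exists t, t <= pot (pc c) g /\ halted prog (run prog inp t c).
Proof.
elim: m c g => [|m IH] c g hm I.
  case: (boolP (halted prog c)) => h; first by exists 0.
  have [g' [_ lt]] := step_all I h; lia.
case: (boolP (halted prog c)) => h; first by exists 0.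
have [g' [I' lt]] := step_all I h.
have hm' : pot (pc (step prog inp c)) g' <= m by lia.
have [t [ht hh]] := IH _ _ hm' I'.
by exists t.+1; split; [lia | ].
Qed.

Lemma final_ok c g : Inv c g -> halted prog c -> Final (out c).
Proof.
case: c g => k R O [a st] I h.
case: k I h => [|[|[|[|[|[|[|[|[|[|[|[|[|[|[|[|[|[|[|[|[|[|[|[|[|[|[|[|[|[|k]]]]]]]]]]]]]]]]]]]]]]]]]]]]]] I h;
  try by case: I => _ _ /= [].
by case: I.
Qed.

End Mach.


Lemma Bd_eq (T : seq nat) : Bd T = (size T).+1 ^ 64.
Proof. reflexivity. Qed.

Lemma run_add P i k1 k2 c : run P i (k1 + k2) c = run P i k2 (run P i k1 c).
Proof. by elim: k1 c => //= k IH c; rewrite IH. Qed.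

Section G.
Variables (T sa : seq nat).
Hypothesis SAok : is_suffix_array T sa.
Hypothesis n0 : 0 < size T.
Local Notation n := (size T).
Local Notation inp := (input_of T sa).

Definition Rr1 := upd (fun _ => 0) 7 n.
Definition Rr2 := upd Rr1 5 1.
Definition Rr3 := upd Rr2 7 (n + 1).
Definition Rr4 := upd Rr3 4 (n + 1 + 1).
Definition Rr5 := upd Rr4 10 2.
Definition R6 := upd Rr5 0 1.

Lemma init_run : run prog inp 6 init_config = Config 6 R6 (fun _ => 0).
Proof. reflexivity. Qed.

Lemma bnd x : x <= n.+2 -> x < Bd T.
Proof. move=> h; apply: (Bd_big SAok n0); nia. Qed.

Lemma good_R6 : good T R6 (fun _ => 0) /\ good T Rr5 (fun _ => 0) /\ good T Rr4 (fun _ => 0) /\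
  good T Rr3 (fun _ => 0) /\ good T Rr2 (fun _ => 0) /\ good T Rr1 (fun _ => 0) /\
  good T (fun _ => 0) (fun _ => 0).
Proof.
have g0 : good T (fun _ => 0) (fun _ => 0) by split => _; apply: bnd.
have g1 : good T Rr1 (fun _ => 0) by apply: good_upd g0 _; apply: bnd; lia.
have g2 : good T Rr2 (fun _ => 0) by apply: good_upd g1 _; apply: bnd; lia.
have g3 : good T Rr3 (fun _ => 0) by apply: good_upd g2 _; apply: bnd; lia.
have g4 : good T Rr4 (fun _ => 0) by apply: good_upd g3 _; apply: bnd; lia.
have g5 : good T Rr5 (fun _ => 0) by apply: good_upd g4 _; apply: bnd; lia.
have g6 : good T R6 (fun _ => 0) by apply: good_upd g5 _; apply: bnd; lia.
by [].
Qed.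

Lemma early k : k <= 6 -> good T (regs (run prog inp k init_config)) (out (run prog inp k init_config)).
Proof.
have [g6 [g5 [g4 [g3 [g2 [g1 g0]]]]]] := good_R6.
case: k => [|[|[|[|[|[|[|k]]]]]]] hk; last by lia.
- exact: g0.
- have -> : run prog inp 1 init_config = Config 1 Rr1 (fun _ => 0) by reflexivity. exact: g1.
- have -> : run prog inp 2 init_config = Config 2 Rr2 (fun _ => 0) by reflexivity. exact: g2.
- have -> : run prog inp 3 init_config = Config 3 Rr3 (fun _ => 0) by reflexivity. exact: g3.
- have -> : run prog inp 4 init_config = Config 4 Rr4 (fun _ => 0) by reflexivity. exact: g4.
- have -> : run prog inp 5 init_config = Config 5 Rr5 (fun _ => 0) by reflexivity. exact: g5.
- rewrite init_run; exact: g6.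
Qed.

Lemma init_Inv : Inv T sa (run prog inp 6 init_config) (1, [::]).
Proof.
rewrite init_run; split.
- exact: (proj1 good_R6).
- by rewrite /Consts /R6 /Rr5 /Rr4 /Rr3 /Rr2 /Rr1 /upd /=; split => //; lia.
- rewrite /Spec; split; first by [].
  right; split; last by [].
  split; last by [].
  split; first by lia.
  do 4 (split; first by []).
  split; first by move=> c; lia.
  by [].
Qed.

End G.

Theorem corollary3 :
  forall d : nat, exists (P : seq instr) (c : nat),
  forall T sa : seq nat,
    0 < size T ->
    all (fun x => x < size T ^ d) T ->
    count_mem (last 0 T) T = 1 ->
    is_suffix_array T sa ->
    exists t : nat,
      [/\ t <= c * size T,
          halted P (run P (input_of T sa) t init_config),
          (forall j, 1 <= j <= size T ->
             out (run P (input_of T sa) t init_config) j = LPF T j) &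
          (forall k, k <= t ->
             (forall r, regs (run P (input_of T sa) k init_config) r < (size T).+1 ^ c) /\
             (forall j, out (run P (input_of T sa) k init_config) j < (size T).+1 ^ c))].
Proof.
move=> d; exists prog, 64 => T sa n0 _ _ SAok.
have I6 := init_Inv SAok n0.
have [t [ht hh]] := terminate SAok n0 (leqnn _) I6.
have eqr k : run prog (input_of T sa) (6 + k) init_config =
    run prog (input_of T sa) k (run prog (input_of T sa) 6 init_config) by rewrite run_add.
exists (6 + t); split.
- rewrite init_run /pot /= in ht; lia.
- by rewrite eqr.
- move=> j hj; rewrite eqr.
  have [g I] := inv_forever SAok n0 t I6.
  exact: (final_ok I hh).
- move=> k hk; case: (leqP k 6) => hk6.
    have [gR gO] := early SAok n0 hk6; rewrite Bd_eq in gR gO; split; [exact: gR | exact: gO].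
  have -> : k = 6 + (k - 6) by lia.
  rewrite eqr.
  have [g [[gR gO] _ _]] := inv_forever SAok n0 (k - 6) I6.
  rewrite Bd_eq in gR gO; split; [exact: gR | exact: gO].
Qed.
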